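(* Let $A=\langle Q,\delta,\gamma,F\rangle$ be a finitely supported pomset automaton. Let $q_0,q_2,q_4\in Q$ and $q_1,q_3,q_5\in F$, and let $U,V,W,X\in\mathsf{Pom}^{\mathsf{sp}}$ be such that $q_0\xrightarrow{U}_A q_1$, $q_0\xrightarrow{V}_A q_0$, $q_2\xrightarrow{X}_A q_3$, $q_4\xrightarrow{W}_A q_5$ and $\gamma(q_0,q_2,q_0)=q_4$. If $X\neq 1$, and moreover $W\neq1$ or $V\neq1$, then $L_A(q_0)$ has unbounded depth, i.e., for every $n\in\mathbb N$ there is $Y\in L_A(q_0)$ with $|Y|>n$.
   Context: Fix a finite alphabet $\Sigma$; pomsets are isomorphism classes of $\Sigma$-labelled posets, $1$ the empty pomset, $a\in\Sigma$ the one-point pomset, $U\cdot V$ the disjoint union with all of $U$ below all of $V$, $U\parallel V$ the disjoint union without added order, and $\mathsf{Pom}^{\mathsf{sp}}$ the smallest set containing $1$ and all $a$ closed under both. Every non-empty series-parallel pomset is exactly one of: a primitive $a$, a sequential composition of two non-empty smaller sp-pomsets, or a parallel composition of two non-empty smaller sp-pomsets. The depth $|U|$ is defined by $|1|=0$, $|a|=1$, and if $U=U_0\cdots U_{n-1}$ or $U=U_0\parallel\dots\parallel U_{n-1}$ with non-empty $U_i$ and $n>1$ maximal for such a decomposition, then $|U|=\max_i|U_i|+1$. A PA is $A=\langle Q,\delta,\gamma,F\rangle$ with $F\subseteq Q$, $\delta:Q\times\Sigma\to Q$, $\gamma:Q^3\to Q$, with states $\bot\notin F$, $\top\in F$ such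 that $\delta(\bot,a)=\delta(\top,a)=\bot$, $\gamma(\bot,r,s)=\gamma(\top,r,s)=\bot$. Traces: the smallest relation with $q\xrightarrow{1}_A q$; $q\xrightarrow{a}_A\delta(q,a)$; $q\xrightarrow{U}_A q''\xrightarrow{V}_A q'$ implies $q\xrightarrow{U\cdot V}_A q'$; $r\xrightarrow{U}_A r'\in F$, $s\xrightarrow{V}_A s'\in F$ imply $q\xrightarrow{U\parallel V}_A\gamma(q,r,s)$. $L_A(q)=\{U:\exists q'\in F.\ q\xrightarrow{U}_A q'\}$. $\preceq_A$ is the smallest preorder with $r,s\preceq_A q$ when $\gamma(q,r,s)\neq\bot$, $\delta(q,a)\preceq_A q$, $\gamma(q,r,s)\preceq_A q$; $\pi_A(q)$ is the smallest $\preceq_A$-downward-closed set containing $q$; $A$ is finitely supported if all $\pi_A(q)$ are finite. *)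

(* Defs.v *)
From Stdlib Require Import Relations List.
From mathcomp Require Import all_boot.
Set Implicit Arguments. Unset Strict Implicit. Unset Printing Implicit Defensive.

Section Pomsets.
Variable Sigma : finType.

(* Pomsets are these structures taken up to the isomorphism [iso] below;
   all structures generated below (by [pone], [prim], [pseq], [ppar]) are
   partial orders, hence so is every sp-pomset. *)
Record pomset := Pomset {
  psize : nat;
  pord : rel 'I_psize;
  plab : 'I_psize -> Sigma }.
Arguments pord : clear implicits.
Arguments plab : clear implicits.

Definition is_poset (U : pomset) : Prop :=
  reflexive (pord U) /\ antisymmetric (pord U) /\ transitive (pord U).

Definition iso (U V : pomset) : Prop :=
  exists f : 'I_(psize U) -> 'I_(psize V),
    bijective f /\ (forall x y, pord V (f x) (f y) = pord U x y)
    /\ (forall x, plab V (f x) = plab U x).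

Lemma ord0_absurd (x : 'I_0) : False. Proof. by case: x. Qed.

Definition pone : pomset :=
  @Pomset 0 (fun _ _ => true) (fun x => match ord0_absurd x with end).

Definition prim (a : Sigma) : pomset :=
  @Pomset 1 (fun _ _ => true) (fun _ => a).

Definition sum_lab (U V : pomset) (x : 'I_(psize U + psize V)) : Sigma :=
  match split x with inl a => plab U a | inr b => plab V b end.
Arguments sum_lab : clear implicits.

Definition pseq (U V : pomset) : pomset :=
  @Pomset (psize U + psize V)
    (fun x y => match split x, split y with
                | inl a, inl b => pord U a b
                | inr a, inr b => pord V a b
                | inl _, inr _ => true
                | inr _, inl _ => false end)
    (sum_lab U V).

Definition ppar (U V : pomset) : pomset :=
  @Pomset (psize U + psize V)
    (fun x y => match split x, split y with
                | inl a, inl b => pord U a b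
                | inr a, inr b => pord V a b
                | _, _ => false end)
    (sum_lab U V).

Definition nonempty (U : pomset) : Prop := 0 < psize U.

Inductive sp : pomset -> Prop :=
| sp_one U : iso U pone -> sp U
| sp_prim U a : iso U (prim a) -> sp U
| sp_seq U V W : sp U -> sp V -> iso W (pseq U V) -> sp W
| sp_par U V W : sp U -> sp V -> iso W (ppar U V) -> sp W.

Definition pseqs (Us : seq pomset) : pomset := foldr pseq pone Us.
Definition ppars (Us : seq pomset) : pomset := foldr ppar pone Us.

Inductive depth : pomset -> nat -> Prop :=
| depth_one U : iso U pone -> depth U 0
| depth_prim U a : iso U (prim a) -> depth U 1
| depth_seq U (Us : seq pomset) (ds : seq nat) :
    1 < size Us -> size ds = size Us ->
    (forall i, i < size Us ->
       nonempty (nth pone Us i) /\ depth (nth pone Us i) (nth 0 ds i)) ->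
    iso U (pseqs Us) ->
    (forall Vs : seq pomset,
       (forall i, i < size Vs -> nonempty (nth pone Vs i)) ->
       iso U (pseqs Vs) -> size Vs <= size Us) ->
    depth U (foldr maxn 0 ds).+1
| depth_par U (Us : seq pomset) (ds : seq nat) :
    1 < size Us -> size ds = size Us ->
    (forall i, i < size Us ->
       nonempty (nth pone Us i) /\ depth (nth pone Us i) (nth 0 ds i)) ->
    iso U (ppars Us) ->
    (forall Vs : seq pomset,
       (forall i, i < size Vs -> nonempty (nth pone Vs i)) ->
       iso U (ppars Vs) -> size Vs <= size Us) ->
    depth U (foldr maxn 0 ds).+1.

End Pomsets.

Record PA (Sigma : finType) (Q : Type) := MkPA {
  delta : Q -> Sigma -> Q;
  gamma : Q -> Q -> Q -> Q;
  F : Q -> Prop;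
  bot : Q;
  top : Q;
  bot_notF : ~ F bot;
  top_F : F top;
  delta_bot : forall a, delta bot a = bot;
  delta_top : forall a, delta top a = bot;
  gamma_bot : forall r s, gamma bot r s = bot;
  gamma_top : forall r s, gamma top r s = bot }.

Section Traces.
Variables (Sigma : finType) (Q : Type) (A : PA Sigma Q).

Inductive trace : Q -> pomset Sigma -> Q -> Prop :=
| tr_one q U : iso U (pone Sigma) -> trace q U q
| tr_prim q a U : iso U (prim a) -> trace q U (delta A q a)
| tr_seq q q'' q' U V W :
    trace q U q'' -> trace q'' V q' -> iso W (pseq U V) -> trace q W q'
| tr_par q r r' s s' U V W :
    trace r U r' -> F A r' -> trace s V s' -> F A s' ->
    iso W (ppar U V) -> trace q W (gamma A q r s).

Definition L (q : Q) (U : pomset Sigma) : Prop :=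
  exists q', F A q' /\ trace q U q'.

(* generating relation of the support preorder: step p q means p is
   directly below q *)
Definition support_step (p q : Q) : Prop :=
  (exists r s, gamma A q r s <> bot A /\ (p = r \/ p = s))
  \/ (exists a, p = delta A q a)
  \/ (exists r s, p = gamma A q r s).

Definition support_le : relation Q := clos_refl_trans Q support_step.

Definition support (q : Q) : Q -> Prop := fun p => support_le p q.

Definition fin_supported : Prop :=
  forall q, exists l : list Q, forall p, support q p -> In p l.

End Traces.

(* Main.v *)
Require Import Defs.
From Stdlib Require Import Classical.
From mathcomp Require Import all_boot zify.
Set Implicit Arguments. Unset Strict Implicit. Unset Printing Implicit Defensive.

Section S.
Variable Sigma : finType.
Notation pom := (pomset Sigma).
Notation po P := (@pord _ P).
Notation pl P := (@plab _ P).
Notation one := (pone Sigma).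
Implicit Types U V W A B C P Q R : pom.

Definition pbin (c : bool) (U V : pom) : pom :=
  @Pomset Sigma (psize U + psize V)
    (fun x y => match split x, split y with
                | inl a, inl b => po U a b
                | inr a, inr b => po V a b
                | inl _, inr _ => c
                | inr _, inl _ => false end)
    (@sum_lab _ U V).

Lemma pseqE U V : pseq U V = pbin true U V. Proof. by []. Qed.
Lemma pparE U V : ppar U V = pbin false U V. Proof. by []. Qed.

Lemma iso_of (U V : pom) (f : 'I_(psize U) -> 'I_(psize V)) g :
  cancel f g -> cancel g f -> (forall x y, po V (f x) (f y) = po U x y) ->
  (forall x, pl V (f x) = pl U x) -> iso U V.
Proof. move=> fK gK Hp Hl; exists f; split; [exact: Bijective fK gK|by []]. Qed.

Lemma iso_refl U : iso U U.
Proof. by apply: (@iso_of _ _ id id). Qed.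

Lemma iso_sym U V : iso U V -> iso V U.
Proof.
case=> f [[g fK gK] [Hp Hl]]; apply: (iso_of gK fK).
- by move=> x y; rewrite -Hp !gK.
- by move=> x; rewrite -Hl gK.
Qed.

Lemma iso_trans U V W : iso U V -> iso V W -> iso U W.
Proof.
case=> f [[g fK gK] [Hp Hl]]; case=> f' [[g' fK' gK'] [Hp' Hl']].
apply: (@iso_of _ _ (f' \o f) (g \o g')).
- by move=> x /=; rewrite fK' fK.
- by move=> x /=; rewrite gK gK'.
- by move=> x y /=; rewrite Hp' Hp.
- by move=> x /=; rewrite Hl' Hl.
Qed.

Definition summap (A B A2 B2 : Type) (f : A -> A2) (g : B -> B2) (s : A + B) : A2 + B2 :=
  match s with inl a => inl (f a) | inr b => inr (g b) end.

Lemma pbin_cong c U U' V V' : iso U U' -> iso V V' -> iso (pbin c U V) (pbin c U' V').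
Proof.
case=> f1 [[g1 fK1 gK1] [Hp1 Hl1]]; case=> f2 [[g2 fK2 gK2] [Hp2 Hl2]].
apply: (@iso_of (pbin c U V) (pbin c U' V') (fun x : 'I_(psize U + psize V) => unsplit (summap f1 f2 (split x)))
                    (fun x : 'I_(psize U' + psize V') => unsplit (summap g1 g2 (split x)))).
- by move=> x; rewrite unsplitK; case: (split x) (splitK x) => a /= <-; rewrite ?fK1 ?fK2.
- by move=> x; rewrite unsplitK; case: (split x) (splitK x) => a /= <-; rewrite ?gK1 ?gK2.
- move=> x y /=; rewrite !unsplitK.
  by case: (split x) => a; case: (split y) => b /=.
- move=> x; rewrite /= /sum_lab unsplitK.
  by case: (split x) => a /=.
Qed.

Ltac addb := repeat match goal with j : ordinal ?n |- _ =>
  lazymatch goal with _ : is_true (nat_of_ord j < n) |- _ => fail | _ => have := ltn_ord j; move=> ? end end.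

Ltac splits := repeat match goal with |- context [split ?z] =>
  let j := fresh "j" in let e := fresh "e" in case: (splitP z) => [j e|j e] /= end.

Ltac fin := addb; first [ by [] | (exfalso; simpl in *; lia) |
   (f_equal; apply: val_inj; simpl in *; lia) ].

Lemma pbin_assoc c A B C : iso (pbin c (pbin c A B) C) (pbin c A (pbin c B C)).
Proof.
apply: (@iso_of (pbin c (pbin c A B) C) (pbin c A (pbin c B C)) (cast_ord (esym (addnA (psize A) (psize B) (psize C)))) (cast_ord (addnA _ _ _))).
- by move=> x; apply: val_inj.
- by move=> x; apply: val_inj.
- move=> x y /=. splits; fin.
- move=> x /=; do 3 (unfold sum_lab; splits); fin.
Qed.

Lemma pbin_1l c V : iso (pbin c one V) V.
Proof.
apply: (@iso_of (pbin c one V) V (cast_ord (add0n (psize V))) (cast_ord (esym (add0n _)))).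
- by move=> x; apply: val_inj.
- by move=> x; apply: val_inj.
- move=> x y /=. splits; fin.
- move=> x /=; do 3 (unfold sum_lab; splits); fin.
Qed.

Lemma pbin_1r c V : iso (pbin c V one) V.
Proof.
apply: (@iso_of (pbin c V one) V (cast_ord (addn0 (psize V))) (cast_ord (esym (addn0 _)))).
- by move=> x; apply: val_inj.
- by move=> x; apply: val_inj.
- move=> x y /=. splits; fin.
- move=> x /=; do 3 (unfold sum_lab; splits); fin.
Qed.


Definition pbins c (Us : seq pom) : pom := foldr (pbin c) one Us.

Lemma pseqsE Us : pseqs Us = pbins true Us.
Proof. by elim: Us => //= U Us ->. Qed.
Lemma pparsE Us : ppars Us = pbins false Us.
Proof. by elim: Us => //= U Us ->. Qed.

Lemma pbins_cat c Us1 Us2 :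
  iso (pbins c (Us1 ++ Us2)) (pbin c (pbins c Us1) (pbins c Us2)).
Proof.
elim: Us1 => [|U Us1 IH] /=; first exact/iso_sym/pbin_1l.
apply: iso_trans (iso_sym (pbin_assoc _ _ _ _)).
exact: pbin_cong (iso_refl _) IH.
Qed.

Fixpoint blk c (Us : seq pom) : 'I_(psize (pbins c Us)) -> nat :=
  match Us return 'I_(psize (pbins c Us)) -> nat with
  | [::] => fun _ => 0
  | U :: Us' => fun x : 'I_(psize U + psize (pbins c Us')) =>
      match split x with inl _ => 0 | inr y => (@blk c Us' y).+1 end
  end.

Lemma split_l m n (a : 'I_m) : split (lshift n a) = inl a.
Proof. exact: (unsplitK (inl a)). Qed.
Lemma split_r m n (a : 'I_n) : split (rshift m a) = inr a.
Proof. exact: (unsplitK (inr a)). Qed.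

Lemma blk_lt c Us (x : 'I_(psize (pbins c Us))) : blk x < size Us.
Proof.
elim: Us x => [|U Us IH] x /=; first by case: x.
by case: (split x) => a //=; rewrite ltnS IH.
Qed.

Lemma blk_po c Us (x y : 'I_(psize (pbins c Us))) : blk x != blk y ->
  po (pbins c Us) x y = c && (blk x < blk y).
Proof.
elim: Us x y => [|U Us IH] x y /=; first by case: x.
case: (split x) => a; case: (split y) => b //=.
- by rewrite andbT.
- by rewrite andbF.
- by rewrite eqSS ltnS; apply: IH.
Qed.

Definition emb (P Q : pom) (e : 'I_(psize P) -> 'I_(psize Q)) :=
  injective e /\ forall x y, po Q (e x) (e y) = po P x y.

Lemma blk_emb c Us i : i < size Us ->
  exists e : 'I_(psize (nth one Us i)) -> 'I_(psize (pbins c Us)),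
    emb e /\ (forall u, blk (e u) = i) /\ (forall x, blk x = i -> exists u, e u = x).
Proof.
elim: Us i => [|U Us IH] [|i] //= Hi.
- exists (@lshift (psize U) (psize (pbins c Us))); split; [split|split].
  + exact: lshift_inj.
  + by move=> x y /=; rewrite !split_l.
  + by move=> u /=; rewrite split_l.
  + move=> x /=; case E: (split x) => [a|b] // _.
    by exists a; rewrite -(splitK x) E.
- have [e [[ei ep] [eb ec]]] := IH i Hi.
  exists (fun u => @rshift (psize U) (psize (pbins c Us)) (e u)); split; [split|split].
  + by move=> u v /= /rshift_inj /ei.
  + by move=> x y /=; rewrite !split_r ep.
  + by move=> u /=; rewrite split_r eb.
  + move=> x /=; case E: (split x) => [a|b] // [] /ec [u Hu].
    by exists u; rewrite Hu -(splitK x) E.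
Qed.

Lemma iso_size U V : iso U V -> psize U = psize V.
Proof. by case=> f [/bij_eq_card]; rewrite !card_ord. Qed.

Lemma psize_pbins c Us : psize (pbins c Us) = sumn (map (@psize _) Us).
Proof. by elim: Us => //= U Us ->. Qed.

Lemma nth_le_sumn (l : seq nat) i : nth 0 l i <= sumn l.
Proof. elim: l i => [|a l IH] [|i] //=; [exact: leq_addr | exact: leq_trans (IH i) (leq_addl _ _)]. Qed.

Lemma nth_lt_sumn (l : seq nat) i : 1 < size l -> (forall j, j < size l -> 0 < nth 0 l j) ->
  i < size l -> nth 0 l i < sumn l.
Proof.
case: l => [|a [|b l]] //= _ Hp.
have Ha := Hp 0 erefl; have Hb := Hp 1 erefl.
case: i => [|i] /= Hi.
- by rewrite -addn1 leq_add2l; apply: leq_trans Hb (leq_addr _ _).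
- apply: leq_trans (_ : a + nth 0 (b :: l) i <= _).
    by rewrite -add1n leq_add2r.
  by rewrite leq_add2l; apply: (nth_le_sumn (b :: l)).
Qed.

Lemma piece_lt c Us i : 1 < size Us -> (forall j, j < size Us -> nonempty (nth one Us j)) ->
  i < size Us -> psize (nth one Us i) < psize (pbins c Us).
Proof.
move=> H2 Hne Hi; rewrite psize_pbins -(nth_map one 0 (@psize _) Hi).
apply: nth_lt_sumn; rewrite ?size_map //.
by move=> j Hj; rewrite (nth_map one) //; apply: Hne.
Qed.


Definition crel c (P : pom) (x y : 'I_(psize P)) : bool :=
  if c then po P x y else ~~ po P x y && ~~ po P y x.
Definition crel2 c (P : pom) (x y : 'I_(psize P)) : bool :=
  if c then po P x y || po P y x else ~~ po P x y && ~~ po P y x.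

Definition irrS c (P : pom) (S : 'I_(psize P) -> Prop) : Prop :=
  forall T : 'I_(psize P) -> Prop, (exists x, S x /\ T x) -> (exists y, S y /\ ~ T y) ->
    ~ (forall x y, S x -> T x -> S y -> ~ T y -> crel c x y).
Definition irr c (P : pom) := irrS c (fun _ : 'I_(psize P) => True).

Definition img (P Q : pom) (e : 'I_(psize P) -> 'I_(psize Q)) (S : 'I_(psize P) -> Prop) :=
  fun y => exists x, S x /\ e x = y.

Lemma crel_emb c P Q (e : 'I_(psize P) -> 'I_(psize Q)) x y : emb e -> crel c (e x) (e y) = crel c x y.
Proof. by case=> _ ep; rewrite /crel !ep. Qed.
Lemma crel2_emb c P Q (e : 'I_(psize P) -> 'I_(psize Q)) x y : emb e -> crel2 c (e x) (e y) = crel2 c x y.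
Proof. by case=> _ ep; rewrite /crel2 !ep. Qed.

Lemma irrS_push c P Q (e : 'I_(psize P) -> 'I_(psize Q)) S : emb e -> irrS c S -> irrS c (img e S).
Proof.
move=> He Hi T [x [[x' [Sx' <-]] Tx]] [y [[y' [Sy' <-]] Ty]] H.
apply: (Hi (fun u => T (e u))); [by exists x'|by exists y'|].
move=> u v Su Tu Sv Tv; rewrite -(crel_emb _ _ _ He).
by apply: H => //; [exists u | exists v].
Qed.

Lemma irrS_ext c P (S S' : 'I_(psize P) -> Prop) : (forall x, S x <-> S' x) -> irrS c S -> irrS c S'.
Proof.
move=> E Hi T [x [Sx Tx]] [y [Sy Ty]] H.
apply: (Hi T); [by exists x; rewrite E|by exists y; rewrite E|].
by move=> u v Su Tu Sv Tv; apply: H => //; rewrite -E.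
Qed.

Lemma irrS_pull c P R (h : 'I_(psize R) -> 'I_(psize P)) S : emb h ->
  (forall x, S x -> exists u, h u = x) -> irrS c S -> irrS c (fun u => S (h u)).
Proof.
move=> [hi hp] Hc Hi T [x [Sx Tx]] [y [Sy Ty]] H.
apply: (Hi (fun z => exists u, h u = z /\ T u)).
- by exists (h x); split => //; exists x.
- exists (h y); split => // [[u [/hi -> //]]].
move=> a b Sa [u [Eu Tu]] Sb Tb.
have [v Ev] := Hc _ Sb; subst a b.
rewrite (crel_emb _ _ _ (conj hi hp)); apply: H => // Tv.
by apply: Tb; exists v.
Qed.

Lemma iso_emb P Q : iso P Q -> exists (f : 'I_(psize P) -> 'I_(psize Q)) g,
  [/\ emb f, emb g, cancel f g & cancel g f].
Proof.
case=> f [[g fK gK] [Hp _]]; exists f, g; split => //.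
- by split => //; apply: can_inj fK.
- split; first by apply: can_inj gK.
  by move=> x y; rewrite -Hp !gK.
Qed.

Lemma irr_iso c P Q : iso P Q -> irr c P -> irr c Q.
Proof.
move=> /iso_emb [f [g [ef eg fK gK]]] Hi.
apply: irrS_ext (irrS_push ef Hi) => x; split => // _.
by exists (g x); rewrite gK.
Qed.

Definition side m n (x : 'I_(m + n)) : bool := if split x is inl _ then true else false.

Lemma irr_pbin c c' U V : c != c' -> nonempty U -> nonempty V -> irr c (pbin c' U V).
Proof.
move=> Hc HU HV.
have cross : forall a b : 'I_(psize (pbin c' U V)), side a != side b -> crel c a b = false.
  move=> a b; rewrite /side /crel /=.
  by case: (split a) => ?; case: (split b) => ? //=; destruct c, c'.
move=> T [x [_ Tx]] [y [_ Ty]] H.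
have Hxy : forall a b : 'I_(psize (pbin c' U V)), T a -> ~ T b -> side a != side b -> False.
  by move=> a b Ta Tb /cross; rewrite H.
case Es: (side x == side y).
  pose z : 'I_(psize U + psize V) :=
    if side x then rshift (psize U) (Ordinal HV) else lshift (psize V) (Ordinal HU).
  have Hz : side z = ~~ side x.
    by rewrite /z; case: (side x); rewrite /side ?split_l ?split_r.
  case: (classic (T z)) => Tz.
  - by apply: (Hxy z y) => //; rewrite Hz -(eqP Es); case: (side x).
  - by apply: (Hxy x z) => //; rewrite Hz; case: (side x).
by apply: (Hxy x y) => //; rewrite Es.
Qed.


Lemma irr_prim c P a : iso P (prim a) -> irr c P.
Proof.
case=> f [[g fK gK] _] T [x [_ Tx]] [y [_ Ty]] _; apply: Ty.
suff -> : y = x by [].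
by rewrite -(fK x) -(fK y); congr g; apply: val_inj; case: (f x) => [[]] //; case: (f y) => [[]].
Qed.

Lemma maxdec c P Us Vs : iso P (pbins c Us) ->
  (forall i, i < size Us -> irr c (nth one Us i)) ->
  (forall i, i < size Vs -> nonempty (nth one Vs i)) ->
  iso P (pbins c Vs) -> size Vs <= size Us.
Proof.
move=> /iso_emb [f [f' [ef ef' fK fK']]] Hirr Hne /iso_emb [g [g' [eg eg' gK gK']]].
pose cb x := blk (f x); pose bb x := blk (g x).
have claim : forall x y, cb x = cb y -> bb x <= bb y.
  move=> x y Ec; rewrite leqNgt; apply/negP => Hlt.
  have Hi : cb x < size Us by apply: blk_lt.
  have [e [ee [eb ec]]] := blk_emb c Hi.
  have eh : emb (fun u => f' (e u)).
    case: ee => ei ep; split; first by move=> u v /(can_inj fK') /ei.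
    by move=> u v; case: ef' => _ ->; apply: ep.
  have Hir := irrS_push eh (Hirr _ Hi).
  have Hblk : forall z, img (fun u => f' (e u)) (fun _ => True) z <-> cb z = cb x.
    move=> z; split.
    - by case=> u [_ <-]; rewrite /cb fK' eb.
    - by move=> /ec [u Hu]; exists u; split => //; rewrite Hu fK.
  have := irrS_ext Hblk Hir.
  move/(_ (fun z => bb z <= bb y)); apply.
  - by exists y.
  - by exists x; split => //; apply/negP; rewrite -ltnNge.
  move=> z w _ Tz _ Tw.
  have Hzw : bb z < bb w.
    by rewrite ltnNge; apply/negP => H'; apply: Tw; apply: leq_trans H' Tz.
  have Hn1 : blk (g z) != blk (g w) by rewrite neq_ltn Hzw.
  have Hn2 : blk (g w) != blk (g z) by rewrite neq_ltn Hzw orbT.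
  case: eg => _ egp; rewrite /crel -!egp (blk_po Hn1) (blk_po Hn2).
  have -> : blk (g z) < blk (g w) by [].
  have -> : blk (g w) < blk (g z) = false by rewrite ltnNge ltnW.
  by case: (c).
have Hx : forall j : 'I_(size Vs), exists x, bb x = j.
  move=> j; have Hj := ltn_ord j.
  have [e [ee [eb ec]]] := blk_emb c Hj.
  exists (g' (e (Ordinal (Hne _ Hj)))).
  by rewrite /bb gK' eb.
have [xj Hxj] := fin_all_exists Hx.
pose phi (j : 'I_(size Vs)) : 'I_(size Us) := Ordinal (blk_lt (f (xj j))).
have phi_inj : injective phi.
  move=> j j' /(congr1 val) /= E.
  apply: ord_inj; rewrite -(Hxj j) -(Hxj j'); apply/eqP; rewrite eqn_leq.
  by rewrite (claim _ _ E) (claim _ _ (esym E)).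
by have := @leq_card _ _ phi phi_inj; rewrite !card_ord.
Qed.


Inductive LB (P : pom) : ('I_(psize P) -> Prop) -> nat -> Prop :=
| lb0 S : LB S 0
| lb1 S x : S x -> LB S 1
| lbs c S S1 k : (forall x, S1 x -> S x) -> (exists x, S1 x) -> (exists y, S y /\ ~ S1 y) ->
    (forall x y, S1 x -> S y -> ~ S1 y -> crel2 c x y) -> irrS c S1 -> LB S1 k -> LB S k.+1.

Lemma LB_push P Q (e : 'I_(psize P) -> 'I_(psize Q)) S k : emb e -> LB S k -> LB (img e S) k.
Proof.
move=> He; elim=> {S k} [S|S x Sx|c S S1 k Hsub [x Sx] [y [Sy Ny]] Hc Hi _ IH].
- exact: lb0.
- by apply: (@lb1 _ _ (e x)); exists x.
apply: (@lbs _ c _ (img e S1)) => //.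
- by move=> z [u [Su <-]]; exists u; split => //; apply: Hsub.
- by exists (e x), x.
- exists (e y); split; first by exists y.
  by case=> u [Su /(proj1 He) Eu]; apply: Ny; rewrite -Eu.
- move=> a b [u [Su <-]] [v [Sv <-]] Nb.
  rewrite crel2_emb //; apply: Hc => // S1v; apply: Nb; by exists v.
- exact: irrS_push.
Qed.

Lemma LB_pull P R (h : 'I_(psize R) -> 'I_(psize P)) S k : emb h ->
  (forall x, S x -> exists u, h u = x) -> LB S k -> LB (fun u => S (h u)) k.
Proof.
move=> He Hc HL; elim: HL Hc => {S k} [S|S x Sx|c S S1 k Hsub [x Sx] [y [Sy Ny]] Hcr Hi _ IH] Hc.
- exact: lb0.
- by have [u Hu] := Hc _ Sx; apply: (@lb1 _ _ u); rewrite Hu.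
apply: (@lbs _ c _ (fun u => S1 (h u))).
- by move=> u /Hsub.
- by have [u Hu] := Hc _ (Hsub _ Sx); exists u; rewrite Hu.
- by have [u Hu] := Hc _ Sy; exists u; rewrite Hu.
- by move=> u v S1u Sv Nv; rewrite -(crel2_emb _ _ _ He); apply: Hcr.
- by apply: irrS_pull => // z /Hsub /Hc.
- by apply: IH => z /Hsub /Hc.
Qed.


Lemma nonempty_iso P Q : iso P Q -> nonempty P -> nonempty Q.
Proof. by rewrite /nonempty => /iso_size ->. Qed.

Lemma empty_iso_one P : ~ nonempty P -> iso P one.
Proof.
rewrite /nonempty lt0n => /negP; rewrite negbK => /eqP E.
apply: (@iso_of P one (cast_ord E) (cast_ord (esym E))).
- by move=> x; apply: val_inj.
- by move=> x; apply: val_inj.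
- by move=> [x Hx]; exfalso; move: Hx; rewrite E.
- by move=> [x Hx]; exfalso; move: Hx; rewrite E.
Qed.

Lemma one_empty P : iso P one -> ~ nonempty P.
Proof. by rewrite /nonempty => /iso_size ->. Qed.

Lemma pbin_emptyl c U V : ~ nonempty U -> iso (pbin c U V) V.
Proof. by move=> /empty_iso_one H; apply: iso_trans (pbin_cong c H (iso_refl V)) (pbin_1l _ _). Qed.
Lemma pbin_emptyr c U V : ~ nonempty V -> iso (pbin c U V) U.
Proof. by move=> /empty_iso_one H; apply: iso_trans (pbin_cong c (iso_refl U) H) (pbin_1r _ _). Qed.

Lemma sp_iso U W : sp U -> iso W U -> sp W.
Proof.
case=> [U' H|U' a H|A B U' HA HB H|A B U' HA HB H] HW.
- exact: (sp_one (iso_trans HW H)).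
- exact: (sp_prim (iso_trans HW H)).
- exact: (sp_seq HA HB (iso_trans HW H)).
- exact: (sp_par HA HB (iso_trans HW H)).
Qed.

Definition goodl c (Us : seq pom) := forall i, i < size Us ->
  nonempty (nth one Us i) /\ sp (nth one Us i) /\ irr c (nth one Us i).

Lemma goodl_cat c Us1 Us2 : goodl c Us1 -> goodl c Us2 -> goodl c (Us1 ++ Us2).
Proof.
move=> H1 H2 i; rewrite size_cat nth_cat; case: (ltnP i (size Us1)) => Hi Hi2; first exact: H1.
by apply: H2; rewrite -(ltn_add2l (size Us1)) subnKC.
Qed.

Definition Flat c (P : pom) := exists Us, 0 < size Us /\ goodl c Us /\ iso P (pbins c Us).

Lemma Flat_iso c P Q : iso P Q -> Flat c Q -> Flat c P.
Proof. by move=> H [Us [H1 [H2 H3]]]; exists Us; do 2 split => //; apply: iso_trans H H3. Qed.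

Lemma flat_bin c c' U V W : sp W -> iso W (pbin c' U V) ->
  (nonempty U -> Flat c U) -> (nonempty V -> Flat c V) -> nonempty W -> Flat c W.
Proof.
move=> spW HW IHU IHV neW.
case: (classic (nonempty U)) => neU; last first.
  have HWV := iso_trans HW (pbin_emptyl c' V neU).
  by apply: Flat_iso HWV (IHV (nonempty_iso HWV neW)).
case: (classic (nonempty V)) => neV; last first.
  have HWU := iso_trans HW (pbin_emptyr c' U neV).
  by apply: Flat_iso HWU (IHU (nonempty_iso HWU neW)).
case: (boolP (c == c')) => [/eqP Ec|Nc].
  subst c'; have [Us1 [s1 [g1 i1]]] := IHU neU; have [Us2 [s2 [g2 i2]]] := IHV neV.
  exists (Us1 ++ Us2); split; first by rewrite size_cat addn_gt0 s1.
  split; first exact: goodl_cat.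
  apply: iso_trans HW (iso_trans (pbin_cong c i1 i2) (iso_sym (pbins_cat _ _ _))).
exists [:: W]; split => //; split.
  move=> [|i] // _ /=; split => //; split => //.
  exact: irr_iso (iso_sym HW) (irr_pbin Nc neU neV).
exact/iso_sym/pbin_1r.
Qed.

Lemma flat c P : sp P -> nonempty P -> Flat c P.
Proof.
elim=> {P} [U H|U a H|A B U HA IHA HB IHB H|A B U HA IHA HB IHB H] neU.
- by case: (one_empty H neU).
- exists [:: U]; split => //; split; last exact/iso_sym/pbin_1r.
  move=> [|i] // _ /=; split => //; split; [exact: sp_prim H | exact: irr_prim H].
- exact: (flat_bin (sp_seq HA HB H) H).
- exact: (flat_bin (sp_par HA HB H) H).
Qed.

Definition Class (P : pom) := ~ nonempty P \/ (exists a, iso P (prim a)) \/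
  (exists c Us, 1 < size Us /\ goodl c Us /\ iso P (pbins c Us)).

Lemma Class_iso P Q : iso P Q -> Class Q -> Class P.
Proof.
move=> H [N|[[a Ha]|[c [Us [H1 [H2 H3]]]]]].
- by left => /(nonempty_iso H).
- by right; left; exists a; apply: iso_trans H Ha.
- by right; right; exists c, Us; do 2 split => //; apply: iso_trans H H3.
Qed.

Lemma class_bin c' U V W : sp U -> sp V -> iso W (pbin c' U V) -> Class U -> Class V -> Class W.
Proof.
move=> spU spV HW CU CV.
case: (classic (nonempty U)) => neU; last first.
  exact: Class_iso (iso_trans HW (pbin_emptyl c' V neU)) CV.
case: (classic (nonempty V)) => neV; last first.
  exact: Class_iso (iso_trans HW (pbin_emptyr c' U neV)) CU.
have [Us1 [s1 [g1 i1]]] := flat c' spU neU; have [Us2 [s2 [g2 i2]]] := flat c' spV neV.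
right; right; exists c', (Us1 ++ Us2); split.
  by rewrite size_cat; lia.
split; first exact: goodl_cat.
apply: iso_trans HW (iso_trans (pbin_cong c' i1 i2) (iso_sym (pbins_cat _ _ _))).
Qed.

Lemma classify P : sp P -> Class P.
Proof.
elim=> {P} [U H|U a H|A B U HA IHA HB IHB H|A B U HA IHA HB IHB H].
- by left; apply: one_empty H.
- by right; left; exists a.
- exact: (class_bin HA HB H).
- exact: (class_bin HA HB H).
Qed.


Lemma nth_le_foldr_maxn (ds : seq nat) i : nth 0 ds i <= foldr maxn 0 ds.
Proof.
elim: ds i => [|d ds IH] [|i] //=; first exact: leq_maxl.
exact: leq_trans (IH i) (leq_maxr _ _).
Qed.

Lemma crel_lt c Us (a b : 'I_(psize (pbins c Us))) : blk a < blk b -> crel c a b.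
Proof.
move=> H.
have Hn1 : blk a != blk b by rewrite neq_ltn H.
have Hn2 : blk b != blk a by rewrite neq_ltn H orbT.
rewrite /crel (blk_po Hn1) (blk_po Hn2) H.
have -> : blk b < blk a = false by rewrite ltnNge ltnW.
by case: (c).
Qed.

Lemma crel2_neq c Us (a b : 'I_(psize (pbins c Us))) : blk a != blk b -> crel2 (~~ c) a b = false.
Proof.
move=> Hn1; have Hn2 : blk b != blk a by rewrite eq_sym.
rewrite /crel2 (blk_po Hn1) (blk_po Hn2).
have : (blk a < blk b) || (blk b < blk a) by rewrite -neq_ltn.
move: (blk a < blk b) (blk b < blk a) => p q.
by case: (c); case: p; case: q.
Qed.

Lemma LB_blocks c P Us (ds : seq nat) : iso P (pbins c Us) ->
  (forall i, i < size Us -> forall S k, @LB (nth one Us i) S k -> k <= nth 0 ds i) ->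
  forall S k, @LB P S k -> k <= (foldr maxn 0 ds).+1.
Proof.
move=> /iso_emb [f [f' [ef ef' fK fK']]] IH S k HL.
pose cb x := blk (f x).
have Hpull : forall i S' m, i < size Us -> (forall z, S' z -> cb z = i) -> LB S' m ->
    m <= foldr maxn 0 ds.
  move=> i S' m Hi Hs HL'.
  have [e [ee [eb ec]]] := blk_emb c Hi.
  have eh : emb (fun u => f' (e u)).
    case: ee => ei ep; split; first by move=> u v /(can_inj fK') /ei.
    by move=> u v; case: ef' => _ ->; apply: ep.
  have := LB_pull eh _ HL'.
  have cov : forall z, S' z -> exists u, f' (e u) = z.
    by move=> z /Hs /ec [u Hu]; exists u; rewrite Hu fK.
  move=> /(_ cov) /IH => /(_ Hi) Hm.
  exact: leq_trans Hm (nth_le_foldr_maxn _ _).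
case: HL => [S0|S0 x _|c' S0 S1 k' Hsub [x Sx] [y [Sy Ny]] Hcr Hir HL1] //.
case: (boolP (c' == c)) => [/eqP Ec|Nc].
  subst c'.
  have Hnl : forall a b, S1 a -> S1 b -> ~ cb a < cb b.
    move=> a b Sa Sb Hab.
    apply: (Hir (fun z => cb z <= cb a)).
    - by exists a.
    - by exists b; split => //; apply/negP; rewrite -ltnNge.
    move=> z w _ Tz _ Tw; rewrite -(crel_emb _ _ _ ef); apply: crel_lt.
    by rewrite ltnNge; apply/negP => H'; apply: Tw; apply: leq_trans H' Tz.
  have Hk : k' <= foldr maxn 0 ds.
    apply: (Hpull (cb x) S1 k' _ _ HL1); first exact: (blk_lt (f x)).
    move=> z Sz; apply/eqP; rewrite eqn_leq; apply/andP; split; rewrite leqNgt; apply/negP.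
    - exact: Hnl.
    - exact: Hnl.
  by rewrite ltnS.
have Ec' : c' = ~~ c by move: Nc; case: (c); case: (c').
subst c'.
have Hsame : forall a b, S1 a -> S0 b -> ~ S1 b -> cb a = cb b.
  move=> a b Sa Sb Nb; apply/eqP; apply/negP => /negP Hn.
  by have := Hcr a b Sa Sb Nb; rewrite -(crel2_emb _ _ _ ef) crel2_neq.
apply: leqW; apply: (Hpull (cb y) S0 k'.+1); first exact: (blk_lt (f y)).
- move=> z Sz; case: (classic (S1 z)) => S1z; first exact: Hsame.
  by rewrite -(Hsame x z) // (Hsame x y).
- exact: (lbs Hsub (ex_intro _ x Sx) (ex_intro _ y (conj Sy Ny)) Hcr Hir HL1).
Qed.



Lemma one_noelt P (x : 'I_(psize P)) : iso P one -> False.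
Proof. by move=> /iso_size E; case: x; rewrite E. Qed.

Lemma prim_uniq P a (x y : 'I_(psize P)) : iso P (prim a) -> x = y.
Proof.
case=> f [[g fK gK] _].
by rewrite -(fK x) -(fK y); congr g; apply: val_inj; case: (f x) => [[]] //; case: (f y) => [[]].
Qed.

Lemma depth_LB N : forall P d, psize P < N -> depth P d -> forall S k, @LB P S k -> k <= d.
Proof.
elim: N => [|N IHN] P d //= HN Hd.
case: Hd HN => {P d} [P H|P a H|P Us ds H1 H2 H3 H4 H5|P Us ds H1 H2 H3 H4 H5] HN S k HL.
- case: HL => [//|S0 x _|c S0 S1 k' _ [x _] _ _ _ _]; exfalso; exact: (one_noelt x H).
- case: HL => [//|//|c S0 S1 k' _ [x Sx] [y [_ Ny]] _ _ _].
  by exfalso; apply: Ny; rewrite -(prim_uniq x y H).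
- rewrite pseqsE in H4.
  apply: (LB_blocks H4) HL => i Hi S' k' HL'.
  have [ne Hd] := H3 i Hi.
  apply: (IHN _ _ _ Hd _ _ HL').
  rewrite -ltnS; apply: leq_trans HN; rewrite ltnS (iso_size H4).
  by apply: piece_lt => // j /H3 [].
- rewrite pparsE in H4.
  apply: (LB_blocks H4) HL => i Hi S' k' HL'.
  have [ne Hd] := H3 i Hi.
  apply: (IHN _ _ _ Hd _ _ HL').
  rewrite -ltnS; apply: leq_trans HN; rewrite ltnS (iso_size H4).
  by apply: piece_lt => // j /H3 [].
Qed.

Lemma choose_list n (R : nat -> nat -> Prop) : (forall i, i < n -> exists d, R i d) ->
  exists ds : seq nat, size ds = n /\ forall i, i < n -> R i (nth 0 ds i).
Proof.
elim: n R => [|n IH] R H; first by exists [::].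
have [d0 H0] := H 0 erefl.
have [ds [Hs Hds]] := IH (fun i => R i.+1) (fun i Hi => H i.+1 Hi).
by exists (d0 :: ds); split; [rewrite /= Hs|case].
Qed.

Lemma depth_ex N : forall P, psize P < N -> sp P -> exists d, depth P d.
Proof.
elim: N => [|N IHN] P //= HN /classify [N0|[[a Ha]|[c [Us [H1 [H2 H3]]]]]].
- by exists 0; apply: depth_one; apply: empty_iso_one.
- by exists 1; apply: depth_prim Ha.
have Hd : forall i, i < size Us -> exists d, depth (nth one Us i) d.
  move=> i Hi; have [ne [spi _]] := H2 i Hi.
  apply: (IHN _ _ spi).
  rewrite -ltnS; apply: leq_trans HN; rewrite ltnS (iso_size H3).
  by apply: piece_lt => // j /H2 [].
have [ds [Hs Hds]] := choose_list Hd.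
have Hmax : forall Vs, (forall i, i < size Vs -> nonempty (nth one Vs i)) ->
    iso P (pbins c Vs) -> size Vs <= size Us.
  by move=> Vs HV HPV; apply: (maxdec H3) => // i /H2 [_ []].
exists (foldr maxn 0 ds).+1; case: c H2 H3 Hmax => H2 H3 Hmax.
- apply: (depth_seq H1 Hs); first by move=> i Hi; split; [case: (H2 i Hi)|apply: Hds].
  + by rewrite pseqsE.
  + by move=> Vs HV; rewrite pseqsE; apply: Hmax.
- apply: (depth_par H1 Hs); first by move=> i Hi; split; [case: (H2 i Hi)|apply: Hds].
  + by rewrite pparsE.
  + by move=> Vs HV; rewrite pparsE; apply: Hmax.
Qed.


Lemma ord3 a b c' (y : 'I_(a + (b + c'))) :
  (exists v, y = lshift _ v) \/ (exists u, y = rshift a (lshift c' u)) \/ (exists w, y = rshift a (rshift b w)).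
Proof.
case E: (split y) => [v|r].
  by left; exists v; rewrite -(splitK y) E.
case E2: (split r) => [u|w]; right; [left; exists u|right; exists w];
  by rewrite -(splitK y) E /= -(splitK r) E2.
Qed.

Lemma emb_r P Q : emb (@rshift (psize P) (psize Q)) (P := Q) (Q := pbin false P Q).
Proof. by split; [exact: rshift_inj|move=> x y /=; rewrite !split_r]. Qed.

Lemma LB_step V X W Z m : nonempty X -> nonempty Z -> irr false Z ->
  (nonempty V \/ nonempty W) ->
  @LB Z (fun _ => True) m ->
  @LB (pbin true V (pbin true (pbin false X Z) W)) (fun _ => True) m.+2.
Proof.
move=> neX neZ irZ neVW HL.
pose M := pbin false X Z.
have HM : @LB M (fun _ => True) m.+1.
  apply: (@lbs M false _ (@img Z M (@rshift (psize X) (psize Z)) (fun _ => True))) => //.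
  - by exists (rshift _ (Ordinal neZ)), (Ordinal neZ).
  - exists (lshift (psize Z) (Ordinal neX)); split => //.
    by case=> u [_ /(congr1 split)]; rewrite split_l split_r.
  - move=> x y [u [_ <-]] _ Ny.
    case E: (split y) => [v|w]; last first.
      by exfalso; apply: Ny; exists w; split => //; rewrite -(splitK y) E.
    by rewrite -(splitK y) E /crel2 /= split_r split_l.
  - exact: irrS_push (emb_r _ _) irZ.
  - exact: LB_push (emb_r _ _) HL.
pose e := fun u : 'I_(psize M) => @rshift (psize V) (psize M + psize W) (lshift (psize W) u).
have ee : emb (P := M) (Q := pbin true V (pbin true M W)) e.
  split; first by move=> u v /rshift_inj /lshift_inj.
  by move=> x y; rewrite /e /= !split_r !split_l.
apply: (@lbs (pbin true V (pbin true M W)) true _ (@img M (pbin true V (pbin true M W)) e (fun _ => True))) => //.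
- by exists (e (lshift (psize Z) (Ordinal neX))), (lshift (psize Z) (Ordinal neX)).
- case: neVW => [neV|neW].
    exists (lshift (psize M + psize W) (Ordinal neV)); split => //.
    by case=> u [_ /(congr1 split)]; rewrite split_l split_r.
  exists (rshift (psize V) (rshift (psize M) (Ordinal neW))); split => //.
  by case=> u [_ /rshift_inj /eqP]; rewrite eq_lrshift.
- move=> x y [u [_ <-]] _ Ny.
  case: (ord3 y) => [[v ->]|[[u' Eu]|[w ->]]].
  + by rewrite /crel2 /e /= split_r split_l orbT.
  + by exfalso; apply: Ny; exists u'; split.
  + by rewrite /crel2 /e /= !split_r split_l.
- apply: irrS_push ee _.
  by apply: irr_pbin => //.
- exact: LB_push ee HM.
Qed.


Fixpoint Zs (U V X W : pom) (k : nat) : pom :=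
  if k is k'.+1 then pbin true V (pbin true (pbin false X (Zs U V X W k')) W) else U.

Lemma Zs_ne U V X W k : nonempty X -> nonempty (Zs U V X W k.+1).
Proof. rewrite /nonempty /= => H; lia. Qed.

Lemma Zs_irr U V X W k : nonempty X -> (nonempty V \/ nonempty W) -> irr false (Zs U V X W k.+1).
Proof.
move=> neX neVW /=.
have neM : nonempty (pbin true (pbin false X (Zs U V X W k)) W).
  by move: neX; rewrite /nonempty /=; lia.
case: (classic (nonempty V)) => neV; first exact: irr_pbin.
have neW : nonempty W by case: neVW.
apply: irr_iso (iso_sym (pbin_emptyl _ _ neV)) _.
apply: irr_pbin => //; move: neX; rewrite /nonempty /=; lia.
Qed.

Lemma Zs_LB U V X W n : nonempty X -> (nonempty V \/ nonempty W) ->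
  exists m, n.+1 <= m /\ @LB (Zs U V X W n.+1) (fun _ => True) m.
Proof.
move=> neX neVW; elim: n => [|n [m [Hm HL]]].
  exists 1; split => //.
  have ne : nonempty (Zs U V X W 1) by apply: Zs_ne.
  exact: (@lb1 _ _ (Ordinal ne)).
exists m.+2; split; first by rewrite ltnS ltnW.
have ne : nonempty (Zs U V X W n.+1) by apply: Zs_ne.
have ir : irr false (Zs U V X W n.+1) by apply: Zs_irr.
exact: (LB_step neX ne ir neVW HL).
Qed.

Lemma Zs_sp U V X W k : sp U -> sp V -> sp X -> sp W -> sp (Zs U V X W k).
Proof.
move=> sU sV sX sW; elim: k => //= k IH.
apply: (sp_seq sV (sp_seq (sp_par sX IH (iso_refl _)) sW (iso_refl _))).
exact: iso_refl.
Qed.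

End S.

Theorem mainTheorem9 (Sigma : finType) (Q : Type) (A : PA Sigma Q)
  (Hfs : fin_supported A)
  (q0 q1 q2 q3 q4 q5 : Q) (U V W X : pomset Sigma) :
  F A q1 -> F A q3 -> F A q5 ->
  sp U -> sp V -> sp W -> sp X ->
  trace A q0 U q1 -> trace A q0 V q0 -> trace A q2 X q3 -> trace A q4 W q5 ->
  gamma A q0 q2 q0 = q4 ->
  ~ iso X (pone Sigma) ->
  (~ iso W (pone Sigma) \/ ~ iso V (pone Sigma)) ->
  forall n : nat, exists (Y : pomset Sigma) (d : nat),
    L A q0 Y /\ depth Y d /\ n < d.
Proof.
move=> F1 F3 F5 sU sV sW sX tU tV tX tW Hg nX nWV n.
have neX : nonempty X.
  by case: (classic (nonempty X)) => // H; exfalso; apply: nX; apply: empty_iso_one H.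
have neVW : nonempty V \/ nonempty W.
  case: nWV => H; [right|left].
  - by case: (classic (nonempty W)) => // N; exfalso; apply: H; apply: empty_iso_one N.
  - by case: (classic (nonempty V)) => // N; exfalso; apply: H; apply: empty_iso_one N.
have Ltr : forall k, L A q0 (Zs U V X W k).
  elim => [|k [qf [Ff Hk]]]; first by exists q1.
  exists q5; split => //.
  apply: (tr_seq tV _ (iso_refl _)).
  apply: (tr_seq (q'' := q4) _ tW (iso_refl _)).
  rewrite -Hg; exact: (tr_par _ tX F3 Hk Ff (iso_refl _)).
have [m [Hm HL]] : exists m, n.+1 <= m /\ @LB _ (Zs U V X W n.+1) (fun _ => True) m.
  exact: Zs_LB.
have spZ : sp (Zs U V X W n.+1) by apply: Zs_sp.
have [d Hd] := depth_ex (N := (psize (Zs U V X W n.+1)).+1) (leqnn _) spZ.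
exists (Zs U V X W n.+1), d; split => //; split => //.
apply: leq_trans Hm _.
exact: (depth_LB (leqnn _) Hd HL).
Qed.
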